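(* Let $d\ge 1$ and let $\mathcal E$ be the set of finite linear combinations $\sum_{i=1}^n c_i \mathcal E_{\xi_i}$ with $n\in\mathbb N$, $c_i\in\mathbb C$, $\xi_i\in\mathbb C^d$, where $\mathcal E_{\xi}(x)=e^{\langle \xi,x\rangle-\frac12\langle\xi,\xi\rangle}$. Let $u,v>0$ with $\frac1u+\frac1v=1$. Then for all $\varphi,\psi\in\mathcal E$ and all $x\in\mathbb R^d$, $$\Big\{[\Gamma(\sqrt u)\varphi]\big(\tfrac{\cdot}{\sqrt v}\big)e^{-\frac{\langle \cdot,\cdot\rangle}{2v}}\Big\}\star\Big\{[\Gamma(\sqrt v)\psi]\big(\tfrac{\cdot}{\sqrt u}\big)e^{-\frac{\langle \cdot,\cdot\rangle}{2u}}\Big\}(x)=(\varphi\diamond\psi)\Big(\frac{x}{\sqrt{uv}}\Big)e^{-\frac{\langle x,x\rangle}{2uv}}.$$ Consequently (replacing $\varphi,\psi$ by $\Gamma(1/\sqrt u)\varphi$, $\Gamma(1/\sqrt v)\psi$), for all $\varphi,\psi\in\mathcal E$, $$\Big[\varphi\big(\tfrac{\cdot}{\sqrt v}\big)e^{-\frac{\langle \cdot,\cdot\rangle}{2v}}\Big]\star\Big[\psi\big(\tfrac{\cdot}{\sqrt u}\big)e^{-\frac{\langle \cdot,\cdot\rangle}{2u}}\Big](x)=\Big[\Gamma\big(\tfrac{1}{\sqrt u}\big)\varphi\diamond\Gamma\big(\tfrac1{\sqrt v}\big)\psi\Big]\Big(\frac{x}{\sqrt{uv}}\Big)e^{-\frac{\langle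 x,x\rangle}{2uv}}.$$
   Context: $\langle\cdot,\cdot\rangle$ denotes the bilinear (not Hermitian) form $\langle a,b\rangle=\sum_i a_ib_i$ on $\mathbb C^d$. $d_Nx=(2\pi)^{-d/2}dx$ is the normalized Lebesgue measure on $\mathbb R^d$, and $\star$ is convolution with respect to $d_Nx$: $(F\star G)(x)=\int_{\mathbb R^d}F(x-y)G(y)\,d_Ny$. On the span $\mathcal E$ of the exponential functions, the Wick product and second quantization operators are determined by bilinearity/linearity and the rules $\mathcal E_\xi\diamond\mathcal E_\eta=\mathcal E_{\xi+\eta}$ and $\Gamma(c)\mathcal E_\xi=\mathcal E_{c\xi}$ for all $\xi,\eta\in\mathbb C^d$, $c\in\mathbb C$ (these agree with the Gaussian Wick product and second quantization operator $\Gamma(c)\sum_n f_n=\sum_n c^nf_n$ of the chaos decomposition of $L^2(\mathbb R^d,\mu)$, $\mu$ the standard Gaussian measure). *)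

(* Defs.v *)
From Stdlib Require Import Reals List.
Open Scope R_scope.

Record C := mkC { Re : R ; Im : R }.
Definition C0 : C := mkC 0 0.
Definition Cofr (r : R) : C := mkC r 0.
Definition Cadd (z w : C) : C := mkC (Re z + Re w) (Im z + Im w).
Definition Cmul (z w : C) : C :=
  mkC (Re z * Re w - Im z * Im w) (Re z * Im w + Im z * Re w).
Definition Cscale (r : R) (z : C) : C := mkC (r * Re z) (r * Im z).
Definition Cexp (z : C) : C :=
  mkC (exp (Re z) * cos (Im z)) (exp (Re z) * sin (Im z)).

(** * Vectors: a point of R^d (resp. C^d) is a map nat -> R (resp. nat -> C);
      only the coordinates 0..d-1 are ever used. *)
Fixpoint Rsum_upto (n : nat) (f : nat -> R) : R :=
  match n with O => 0 | S n => Rsum_upto n f + f n end.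
Fixpoint Csum_upto (n : nat) (f : nat -> C) : C :=
  match n with O => C0 | S n => Cadd (Csum_upto n f) (f n) end.

Definition rdot (d : nat) (x y : nat -> R) : R := Rsum_upto d (fun i => x i * y i).
Definition cdot (d : nat) (a b : nat -> C) : C := Csum_upto d (fun i => Cmul (a i) (b i)).
Definition creal (x : nat -> R) : nat -> C := fun i => Cofr (x i).
Definition vsub (x y : nat -> R) : nat -> R := fun i => x i - y i.
Definition vscale (r : R) (x : nat -> R) : nat -> R := fun i => r * x i.

Definition expo (d : nat) (xi : nat -> C) (x : nat -> R) : C :=
  Cexp (Cadd (cdot d xi (creal x)) (Cscale (-(1/2)) (cdot d xi xi))).

(** * The span E of exponentials: an element sum_i c_i E_{xi_i} is given by
      the list of pairs (c_i, xi_i). *)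
Definition Exps := list (C * (nat -> C)).
Definition evalE (d : nat) (phi : Exps) (x : nat -> R) : C :=
  fold_right (fun p acc => Cadd (Cmul (fst p) (expo d (snd p) x)) acc) C0 phi.
(** second quantization: Gamma(c) E_xi = E_{c xi}, extended linearly *)
Definition GammaE (c : C) (phi : Exps) : Exps :=
  map (fun p => (fst p, fun i => Cmul c (snd p i))) phi.
(** Wick product: E_xi <> E_eta = E_{xi+eta}, extended bilinearly *)
Definition wick (phi psi : Exps) : Exps :=
  flat_map (fun p => map (fun q => (Cmul (fst p) (fst q),
                                    fun i => Cadd (snd p i) (snd q i))) psi) phi.

Definition improper_int (f : R -> R) (l : R) : Prop :=
  (forall a b, inhabited (Riemann_integrable f a b)) /\
  forall eps, eps > 0 -> exists M, M > 0 /\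
    forall a b (pr : Riemann_integrable f a b),
      a <= - M -> M <= b -> Rabs (RiemannInt pr - l) < eps.

Definition improper_intC (g : R -> C) (I : C) : Prop :=
  improper_int (fun t => Re (g t)) (Re I) /\ improper_int (fun t => Im (g t)) (Im I).

Definition upd (y : nat -> R) (k : nat) (t : R) : nat -> R :=
  fun i => if Nat.eqb i k then t else y i.

(** [is_integral_Rd k F I]: the iterated improper Riemann integral of F over
    the coordinates 0..k-1 (Lebesgue measure dy) converges and equals I. *)
Fixpoint is_integral_Rd (k : nat) : ((nat -> R) -> C) -> C -> Prop :=
  match k with
  | O => fun F I => I = F (fun _ => 0)
  | S k => fun F I =>
      exists G : R -> C,
        (forall t, is_integral_Rd k (fun y => F (upd y k t)) (G t)) /\
        improper_intC G I
  end.

(** convolution w.r.t. d_N y = (2 pi)^(-d/2) dy : (F * G)(x) = I *)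
Definition conv_is (d : nat) (F G : (nat -> R) -> C) (x : nat -> R) (I : C) : Prop :=
  exists J, is_integral_Rd d (fun y => Cmul (F (vsub x y)) (G y)) J /\
            I = Cscale ((/ sqrt (2 * PI)) ^ d) J.

Definition dilgauss (d : nat) (f : (nat -> R) -> C) (w : R) : (nat -> R) -> C :=
  fun y => Cmul (f (vscale (/ sqrt w) y)) (Cofr (exp (- rdot d y y / (2 * w)))).

(* Main.v *)
Require Import Defs.
From Stdlib Require Import Reals Lra Lia Psatz Nsatz List ClassicalEpsilon FunctionalExtensionality.
Import Defs.
Open Scope R_scope.

Definition Int (f:R->R) (a b:R) : R :=
  epsilon (inhabits 0) (fun l => exists pr : Riemann_integrable f a b, RiemannInt pr = l).

Lemma Int_eq f a b (pr : Riemann_integrable f a b) : Int f a b = RiemannInt pr.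
Proof.
  unfold Int. destruct (epsilon_spec (inhabits 0) (fun l => exists pr : Riemann_integrable f a b, RiemannInt pr = l)) as [pr' H].
  - exists (RiemannInt pr), pr; reflexivity.
  - rewrite <- H. apply RiemannInt_P5.
Qed.

Lemma integ f a b : continuity f -> Riemann_integrable f a b.
Proof.
  intros Hf. destruct (Rle_dec a b).
  - apply continuity_implies_RiemannInt; auto.
  - apply RiemannInt_P1. apply continuity_implies_RiemannInt; auto; lra.
Qed.

Lemma Int_lin f g a b l : continuity f -> continuity g ->
  Int (fun x => f x + l * g x) a b = Int f a b + l * Int g a b.
Proof.
  intros Hf Hg.
  rewrite (Int_eq _ _ _ (integ f a b Hf)), (Int_eq _ _ _ (integ g a b Hg)).
  rewrite (Int_eq _ _ _ (RiemannInt_P10 l (integ f a b Hf) (integ g a b Hg))).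
  apply RiemannInt_P13.
Qed.

Lemma Int_ext f g a b : (forall x, f x = g x) -> Int f a b = Int g a b.
Proof. intros H. replace g with f; auto. apply functional_extensionality; auto. Qed.

Lemma Int_chasles f a b c : continuity f -> Int f a b + Int f b c = Int f a c.
Proof.
  intros Hf. rewrite (Int_eq _ _ _ (integ f a b Hf)), (Int_eq _ _ _ (integ f b c Hf)),
    (Int_eq _ _ _ (integ f a c Hf)). apply RiemannInt_P26.
Qed.

Lemma Int_refl f a : continuity f -> Int f a a = 0.
Proof. intros Hf. pose proof (Int_chasles f a a a Hf). lra. Qed.

Lemma Int_mono f g a b : continuity f -> continuity g -> a <= b ->
  (forall x, a <= x <= b -> f x <= g x) -> Int f a b <= Int g a b.
Proof.
  intros Hf Hg Hab H. rewrite (Int_eq _ _ _ (integ f a b Hf)), (Int_eq _ _ _ (integ g a b Hg)).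
  apply RiemannInt_P19; auto. intros; apply H; lra.
Qed.

Lemma cont_abs f : continuity f -> continuity (fun x => Rabs (f x)).
Proof. intros Hf x. apply (continuity_pt_comp f Rabs); auto. apply Rcontinuity_abs. Qed.

Lemma Int_abs f a b : continuity f -> a <= b -> Rabs (Int f a b) <= Int (fun x => Rabs (f x)) a b.
Proof.
  intros Hf Hab. rewrite (Int_eq _ _ _ (integ f a b Hf)), (Int_eq _ _ _ (integ _ a b (cont_abs f Hf))).
  apply RiemannInt_P17; auto.
Qed.

Lemma Int_bound f g a b : continuity f -> continuity g -> a <= b ->
  (forall x, a <= x <= b -> Rabs (f x) <= g x) -> Rabs (Int f a b) <= Int g a b.
Proof.
  intros Hf Hg Hab H. eapply Rle_trans. apply Int_abs; auto.
  apply Int_mono; auto. apply cont_abs; auto.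
Qed.

Lemma Int_prim_deriv f a x : continuity f -> derivable_pt_lim (fun y => Int f a y) x (f x).
Proof.
  intros Hf.
  set (lo := Rmin a x - 1). set (hi := Rmax a x + 1).
  assert (h : lo <= hi) by (unfold lo, hi; pose proof (Rmin_l a x); pose proof (Rmax_l a x); lra).
  assert (C0 : forall y, lo <= y <= hi -> continuity_pt f y) by (intros; apply Hf).
  pose proof (@RiemannInt_P28 f lo hi x h C0) as D.
  assert (Hx : lo <= x <= hi) by (unfold lo, hi; pose proof (Rmin_r a x); pose proof (Rmax_r a x); lra).
  specialize (D Hx).
  apply derivable_pt_lim_locally_ext with (f := fun z => primitive h (FTC_P1 h C0) z + - Int f lo a) (a := lo) (b := hi).
  - unfold lo, hi; pose proof (Rmin_r a x); pose proof (Rmax_r a x); lra.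
  - intros z Hz. unfold primitive. destruct (Rle_dec lo z); [|lra]. destruct (Rle_dec z hi); [|lra].
    rewrite <- Int_eq. rewrite <- (Int_chasles f lo a z Hf). ring.
  - replace (f x) with (f x + 0) by ring. apply derivable_pt_lim_plus; auto. apply derivable_pt_lim_const.
Qed.

Lemma deriv_zero_const G a b : (forall x, derivable_pt_lim G x 0) -> G b = G a.
Proof.
  intros H. destruct (Rtotal_order a b) as [Hab|[Hab|Hab]].
  - destruct (MVT_cor2 G (fun _ => 0) a b Hab) as [c [Hc _]]; auto. lra.
  - subst; auto.
  - destruct (MVT_cor2 G (fun _ => 0) b a Hab) as [c [Hc _]]; auto. lra.
Qed.

Lemma FTC F f a b : continuity f -> (forall x, derivable_pt_lim F x (f x)) -> Int f a b = F b - F a.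
Proof.
  intros Hf HF.
  assert (E : (fun y => F y - Int f a y) b = (fun y => F y - Int f a y) a).
  { apply (deriv_zero_const (fun y => F y - Int f a y)). intros x. replace 0 with (f x - f x) by ring.
    apply derivable_pt_lim_minus; auto. apply Int_prim_deriv; auto. }
  simpl in E. rewrite Int_refl in E; auto. lra.
Qed.

Lemma Int_scal f a b l : continuity f -> Int (fun x => l * f x) a b = l * Int f a b.
Proof.
  intros Hf. assert (H0 : continuity (fun _ : R => 0)) by reg.
  rewrite <- (Int_ext (fun x => 0 + l * f x)) by (intros; ring).
  rewrite Int_lin; auto. rewrite (FTC (fun _ => 0)); [ring|auto|]. intros; apply derivable_pt_lim_const.
Qed.

Lemma Int_plus f g a b : continuity f -> continuity g ->
  Int (fun x => f x + g x) a b = Int f a b + Int g a b.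
Proof.
  intros Hf Hg. rewrite <- (Int_ext (fun x => f x + 1 * g x)) by (intros; ring).
  rewrite Int_lin; auto. ring.
Qed.

Lemma dpl_val f x l l' : l = l' -> derivable_pt_lim f x l -> derivable_pt_lim f x l'.
Proof. intros ->; auto. Qed.
Lemma dpl_plus f g x a b : derivable_pt_lim f x a -> derivable_pt_lim g x b ->
  derivable_pt_lim (fun t => f t + g t) x (a + b).
Proof. intros; exact (derivable_pt_lim_plus f g x a b H H0). Qed.
Lemma dpl_minus f g x a b : derivable_pt_lim f x a -> derivable_pt_lim g x b ->
  derivable_pt_lim (fun t => f t - g t) x (a - b).
Proof. intros; exact (derivable_pt_lim_minus f g x a b H H0). Qed.
Lemma dpl_mult f g x a b : derivable_pt_lim f x a -> derivable_pt_lim g x b ->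
  derivable_pt_lim (fun t => f t * g t) x (a * g x + f x * b).
Proof. intros. eapply dpl_val; [|exact (derivable_pt_lim_mult f g x a b H H0)]. ring. Qed.
Lemma dpl_opp f x a : derivable_pt_lim f x a -> derivable_pt_lim (fun t => - f t) x (- a).
Proof. intros; exact (derivable_pt_lim_opp f x a H). Qed.
Lemma dpl_const c x : derivable_pt_lim (fun _ => c) x 0.
Proof. apply derivable_pt_lim_const. Qed.
Lemma dpl_id x : derivable_pt_lim (fun t => t) x 1.
Proof. apply derivable_pt_lim_id. Qed.
Lemma dpl_exp f x a : derivable_pt_lim f x a -> derivable_pt_lim (fun t => exp (f t)) x (exp (f x) * a).
Proof. intros. eapply dpl_val; [|exact (derivable_pt_lim_comp f exp x a (exp (f x)) H (derivable_pt_lim_exp (f x)))]. ring. Qed.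
Lemma dpl_cos f x a : derivable_pt_lim f x a -> derivable_pt_lim (fun t => cos (f t)) x (- sin (f x) * a).
Proof. intros. eapply dpl_val; [|exact (derivable_pt_lim_comp f cos x a (- sin (f x)) H (derivable_pt_lim_cos (f x)))]. ring. Qed.
Lemma dpl_sin f x a : derivable_pt_lim f x a -> derivable_pt_lim (fun t => sin (f t)) x (cos (f x) * a).
Proof. intros. eapply dpl_val; [|exact (derivable_pt_lim_comp f sin x a (cos (f x)) H (derivable_pt_lim_sin (f x)))]. ring. Qed.
Lemma dpl_pow2 f x a : derivable_pt_lim f x a -> derivable_pt_lim (fun t => f t ^ 2) x (2 * f x * a).
Proof. intros. eapply dpl_val; [|apply (dpl_mult f (fun t => f t * 1)); [exact H| eapply dpl_val;[|apply (dpl_mult f (fun _ => 1)); [exact H| apply dpl_const]]; reflexivity]]. simpl; ring.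
Qed.
Lemma dpl_div_const f x a c : derivable_pt_lim f x a -> derivable_pt_lim (fun t => f t / c) x (a / c).
Proof. intros. unfold Rdiv. eapply dpl_val; [|apply (dpl_mult f (fun _ => / c)); [exact H|apply dpl_const]]. ring. Qed.

Ltac dpl_step :=
  first
  [ apply dpl_plus | apply dpl_minus | apply dpl_div_const | apply dpl_pow2 | apply dpl_mult | apply dpl_opp
  | apply dpl_exp | apply dpl_cos | apply dpl_sin | apply dpl_id | apply dpl_const ].
Ltac dpl_solve := eapply dpl_val; [|repeat dpl_step]; cbv beta.


Lemma cont_plus f g : continuity f -> continuity g -> continuity (fun t => f t + g t).
Proof. intros; exact (continuity_plus f g H H0). Qed.
Lemma cont_mult f g : continuity f -> continuity g -> continuity (fun t => f t * g t).
Proof. intros; exact (continuity_mult f g H H0). Qed.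
Lemma cont_scal c f : continuity f -> continuity (fun t => c * f t).
Proof. intros; exact (continuity_scal f c H). Qed.
Lemma cont_const c : continuity (fun _ => c).
Proof. reg. Qed.
Lemma cont_lin f g c : continuity f -> continuity g -> continuity (fun t => f t + c * g t).
Proof. intros. apply cont_plus; auto. apply cont_scal; auto. Qed.

Lemma imp_intro f l : continuity f ->
  (forall eps, eps > 0 -> exists M, M > 0 /\ forall a b, a <= -M -> M <= b -> Rabs (Int f a b - l) < eps) ->
  improper_int f l.
Proof.
  intros Hf H. split.
  - intros a b. constructor. apply integ; auto.
  - intros eps He. destruct (H eps He) as [M [HM H']]. exists M; split; auto.
    intros a b pr Ha Hb. rewrite <- Int_eq. auto.
Qed.

Lemma imp_elim f l : improper_int f l ->
  forall eps, eps > 0 -> exists M, M > 0 /\ forall a b, a <= -M -> M <= b -> Rabs (Int f a b - l) < eps.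
Proof.
  intros [H1 H2] eps He. destruct (H2 eps He) as [M [HM H']]. exists M; split; auto.
  intros a b Ha Hb. destruct (H1 a b) as [pr]. rewrite (Int_eq _ _ _ pr). auto.
Qed.

Lemma imp_lin f g l1 l2 c : continuity f -> continuity g ->
  improper_int f l1 -> improper_int g l2 -> improper_int (fun t => f t + c * g t) (l1 + c * l2).
Proof.
  intros Hf Hg I1 I2. apply imp_intro.
  { intros x. apply continuity_pt_plus; auto. apply continuity_pt_scal; auto. }
  intros eps He.
  destruct (imp_elim f l1 I1 (eps / 2 / (1 + Rabs c))) as [M1 [HM1 H1]].
  { apply Rdiv_lt_0_compat; [lra|]. pose proof (Rabs_pos c); lra. }
  destruct (imp_elim g l2 I2 (eps / 2 / (1 + Rabs c))) as [M2 [HM2 H2]].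
  { apply Rdiv_lt_0_compat; [lra|]. pose proof (Rabs_pos c); lra. }
  exists (Rmax M1 M2). split. { pose proof (Rmax_l M1 M2); lra. }
  intros a b Ha Hb. rewrite Int_lin; auto.
  pose proof (Rmax_l M1 M2); pose proof (Rmax_r M1 M2).
  specialize (H1 a b ltac:(lra) ltac:(lra)). specialize (H2 a b ltac:(lra) ltac:(lra)).
  replace (Int f a b + c * Int g a b - (l1 + c * l2)) with ((Int f a b - l1) + c * (Int g a b - l2)) by ring.
  eapply Rle_lt_trans. apply Rabs_triang. rewrite Rabs_mult.
  assert (Hc : 0 <= Rabs c) by apply Rabs_pos.
  set (e := eps / 2 / (1 + Rabs c)) in *.
  assert (He' : e * (1 + Rabs c) = eps / 2) by (unfold e; field; lra).
  assert (Rabs c * Rabs (Int g a b - l2) <= Rabs c * e) by (apply Rmult_le_compat_l; lra).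
  nra.
Qed.

Lemma imp_unique f l1 l2 : improper_int f l1 -> improper_int f l2 -> l1 = l2.
Proof.
  intros I1 I2. apply Rle_antisym; apply Rnot_lt_le; intros Hlt.
  - destruct (imp_elim f l1 I1 ((l1 - l2)/2)) as [M1 [HM1 H1]]; [lra|].
    destruct (imp_elim f l2 I2 ((l1 - l2)/2)) as [M2 [HM2 H2]]; [lra|].
    pose proof (Rmax_l M1 M2); pose proof (Rmax_r M1 M2).
    specialize (H1 (- Rmax M1 M2) (Rmax M1 M2) ltac:(lra) ltac:(lra)).
    specialize (H2 (- Rmax M1 M2) (Rmax M1 M2) ltac:(lra) ltac:(lra)).
    apply Rabs_def2 in H1; apply Rabs_def2 in H2; lra.
  - destruct (imp_elim f l1 I1 ((l2 - l1)/2)) as [M1 [HM1 H1]]; [lra|].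
    destruct (imp_elim f l2 I2 ((l2 - l1)/2)) as [M2 [HM2 H2]]; [lra|].
    pose proof (Rmax_l M1 M2); pose proof (Rmax_r M1 M2).
    specialize (H1 (- Rmax M1 M2) (Rmax M1 M2) ltac:(lra) ltac:(lra)).
    specialize (H2 (- Rmax M1 M2) (Rmax M1 M2) ltac:(lra) ltac:(lra)).
    apply Rabs_def2 in H1; apply Rabs_def2 in H2; lra.
Qed.

Lemma imp_bound f g l1 l2 : continuity f -> continuity g ->
  improper_int f l1 -> improper_int g l2 -> (forall t, Rabs (f t) <= g t) -> Rabs l1 <= l2.
Proof.
  intros Hf Hg I1 I2 H. apply Rnot_lt_le; intros Hlt.
  set (e := (Rabs l1 - l2) / 2).
  destruct (imp_elim f l1 I1 e) as [M1 [HM1 H1]]; [unfold e; lra|].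
  destruct (imp_elim g l2 I2 e) as [M2 [HM2 H2]]; [unfold e; lra|].
  pose proof (Rmax_l M1 M2); pose proof (Rmax_r M1 M2).
  specialize (H1 (- Rmax M1 M2) (Rmax M1 M2) ltac:(lra) ltac:(lra)).
  specialize (H2 (- Rmax M1 M2) (Rmax M1 M2) ltac:(lra) ltac:(lra)).
  pose proof (Int_bound f g (- Rmax M1 M2) (Rmax M1 M2) Hf Hg ltac:(lra) ltac:(intros; auto)).
  pose proof (Rabs_triang_inv l1 (Int f (- Rmax M1 M2) (Rmax M1 M2))).
  rewrite Rabs_minus_sym in H1.
  apply Rabs_def2 in H2. unfold e in *. lra.
Qed.

Lemma imp_ext f g l : (forall t, f t = g t) -> improper_int f l -> improper_int g l.
Proof. intros H. replace g with f; auto. apply functional_extensionality; auto. Qed.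

Lemma imp_zero : improper_int (fun _ => 0) 0.
Proof.
  apply imp_intro. { reg. }
  intros eps He. exists 1. split; [lra|]. intros a b _ _.
  rewrite (FTC (fun _ => 0)). { rewrite Rminus_0_r, Rminus_0_r, Rabs_R0; lra. }
  reg. intros; apply derivable_pt_lim_const.
Qed.

Lemma exp_neg_le x : 0 < x -> exp (- x) <= / x.
Proof.
  intros Hx. pose proof (exp_ineq1_le x). rewrite exp_Ropp.
  apply Rinv_le_contravar; auto. lra.
Qed.

Lemma tail_right f K M b : continuity f -> (forall t, Rabs (f t) <= K * exp (- Rabs t)) ->
  0 <= M -> M <= b -> Rabs (Int f M b) <= K * exp (- M).
Proof.
  intros Hf HK HM Hb. eapply Rle_trans.
  apply (Int_bound f (fun t => K * exp (- t))); auto. { reg. }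
  { intros x Hx. rewrite <- (Rabs_right x) at 2 by lra. auto. }
  rewrite (FTC (fun t => - K * exp (- t))). 2: reg.
  - assert (0 <= K). { pose proof (HK 0). pose proof (Rabs_pos (f 0)). pose proof (exp_pos (- Rabs 0)). nra. }
    pose proof (exp_pos (-b)). nra.
  - intros x. replace (K * exp (- x)) with (- K * (exp (- x) * (-1))) by ring.
    apply derivable_pt_lim_scal. apply (derivable_pt_lim_comp (fun t => - t) exp).
    + replace (-1) with (- (1)) by ring. apply derivable_pt_lim_opp, derivable_pt_lim_id.
    + apply derivable_pt_lim_exp.
Qed.

Lemma tail_left f K M a : continuity f -> (forall t, Rabs (f t) <= K * exp (- Rabs t)) ->
  0 <= M -> a <= - M -> Rabs (Int f a (- M)) <= K * exp (- M).
Proof.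
  intros Hf HK HM Ha. eapply Rle_trans.
  apply (Int_bound f (fun t => K * exp t)); auto. { reg. }
  { intros x Hx. replace x with (- Rabs x) at 2. auto. rewrite Rabs_left1 by lra. ring. }
  rewrite (FTC (fun t => K * exp t)). 2: reg.
  - assert (0 <= K). { pose proof (HK 0). pose proof (Rabs_pos (f 0)). pose proof (exp_pos (- Rabs 0)). nra. }
    pose proof (exp_pos a). nra.
  - intros x. apply derivable_pt_lim_scal, derivable_pt_lim_exp.
Qed.

Lemma tail_est f K M a b : continuity f -> (forall t, Rabs (f t) <= K * exp (- Rabs t)) ->
  0 <= M -> a <= - M -> M <= b -> Rabs (Int f a b - Int f (- M) M) <= 2 * K * exp (- M).
Proof.
  intros Hf HK HM Ha Hb.
  rewrite <- (Int_chasles f a (- M) b Hf), <- (Int_chasles f (- M) M b Hf).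
  replace (Int f a (- M) + (Int f (- M) M + Int f M b) - Int f (- M) M) with (Int f a (- M) + Int f M b) by ring.
  eapply Rle_trans. apply Rabs_triang.
  pose proof (tail_left f K M a Hf HK HM Ha). pose proof (tail_right f K M b Hf HK HM Hb). lra.
Qed.

Lemma exp_le_exp x y : x <= y -> exp x <= exp y.
Proof. intros H. destruct (Rle_lt_or_eq_dec _ _ H). left; apply exp_increasing; auto. subst; lra. Qed.

Lemma imp_exists f K : continuity f -> (forall t, Rabs (f t) <= K * exp (- Rabs t)) ->
  exists l, improper_int f l.
Proof.
  intros Hf HK.
  assert (HK0 : 0 <= K). { pose proof (HK 0). pose proof (Rabs_pos (f 0)). pose proof (exp_pos (- Rabs 0)). nra. }
  set (u := fun n : nat => Int f (- INR n) (INR n)).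
  assert (Hu : forall n m, (n <= m)%nat -> Rabs (u m - u n) <= 2 * K * exp (- INR n)).
  { intros n m Hnm. unfold u. apply tail_est; auto. apply pos_INR.
    apply le_INR in Hnm; lra. apply le_INR in Hnm; lra. }
  assert (Hsmall : forall e, e > 0 -> exists N, (0 < N)%nat /\ 2 * K * exp (- INR N) < e).
  { intros e He. destruct (archimed_cor1 (e / (2 * K + 1))) as [N [HN1 HN2]].
    { apply Rdiv_lt_0_compat; lra. }
    exists N. split; auto. assert (0 < INR N) by (apply lt_0_INR; auto).
    pose proof (exp_neg_le (INR N) H).
    apply Rle_lt_trans with ((2 * K + 1) * / INR N).
    { pose proof (exp_pos (- INR N)). nra. }
    apply Rmult_lt_compat_l with (r := 2 * K + 1) in HN1; [|lra].
    replace ((2 * K + 1) * (e / (2 * K + 1))) with e in HN1 by (field; lra). lra. }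
  assert (HC : Cauchy_crit u).
  { intros e He. destruct (Hsmall (e/2)) as [N [_ HN]]; [lra|]. exists N.
    intros n m Hn Hm. unfold Rgt in Hn, Hm. unfold R_dist.
    replace (u n - u m) with ((u n - u N) - (u m - u N)) by ring.
    eapply Rle_lt_trans. apply Rabs_triang. rewrite Rabs_Ropp.
    pose proof (Hu N n ltac:(lia)). pose proof (Hu N m ltac:(lia)). lra. }
  destruct (R_complete u HC) as [l Hl]. exists l.
  apply imp_intro; auto. intros eps He.
  destruct (Hsmall (eps / 4)) as [N [HN0 HN]]; [lra|].
  destruct (Hl (eps / 4)) as [N' HN']; [lra|].
  exists (INR N). split. { apply lt_0_INR; auto. }
  intros a b Ha Hb.
  pose proof (tail_est f K (INR N) a b Hf HK (pos_INR N) Ha Hb).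
  pose proof (Hu N (max N N') ltac:(lia)).
  specialize (HN' (max N N') ltac:(lia)). unfold R_dist in HN'.
  fold (u N) in H.
  replace (Int f a b - l) with ((Int f a b - u N) - (u (max N N') - u N) + (u (max N N') - l)) by ring.
  eapply Rle_lt_trans. apply Rabs_triang. eapply Rle_lt_trans. apply Rplus_le_compat_r. apply Rabs_triang.
  rewrite Rabs_Ropp. lra.
Qed.

Lemma imp_deriv f g h H l K : continuity f -> continuity g -> continuity h ->
  (forall t, derivable_pt_lim H t (h t)) -> (forall t, f t = g t - h t) ->
  improper_int g l -> (forall t, Rabs (H t) <= K * exp (- Rabs t)) -> improper_int f l.
Proof.
  intros Hf Hg Hh HH Hfg Ig HK.
  assert (HK0 : 0 <= K). { pose proof (HK 0). pose proof (Rabs_pos (H 0)). pose proof (exp_pos (- Rabs 0)). nra. }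
  apply imp_intro; auto. intros eps He.
  destruct (imp_elim g l Ig (eps/2)) as [M1 [HM1 H1]]; [lra|].
  destruct (archimed_cor1 (eps / (4 * K + 1))) as [N [HN1 HN2]].
  { apply Rdiv_lt_0_compat; lra. }
  assert (HN : 0 < INR N) by (apply lt_0_INR; auto).
  exists (Rmax M1 (INR N)). pose proof (Rmax_l M1 (INR N)); pose proof (Rmax_r M1 (INR N)).
  split; [lra|]. intros a b Ha Hb.
  rewrite (Int_ext f (fun t => g t + (-1) * h t)) by (intros; rewrite Hfg; ring).
  rewrite Int_lin; auto. rewrite (FTC H h); auto.
  specialize (H1 a b ltac:(lra) ltac:(lra)).
  pose proof (HK a) as Ka. pose proof (HK b) as Kb.
  assert (Ea : exp (- Rabs a) <= / INR N).
  { eapply Rle_trans; [|apply exp_neg_le; auto]. apply exp_le_exp.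
    rewrite Rabs_left1 by lra. lra. }
  assert (Eb : exp (- Rabs b) <= / INR N).
  { eapply Rle_trans; [|apply exp_neg_le; auto]. apply exp_le_exp.
    rewrite Rabs_right by lra. lra. }
  assert (Hi : (4 * K + 1) * / INR N < eps).
  { apply Rmult_lt_compat_l with (r := 4 * K + 1) in HN1; [|lra].
    replace ((4 * K + 1) * (eps / (4 * K + 1))) with eps in HN1 by (field; lra). lra. }
  assert (0 < / INR N) by (apply Rinv_0_lt_compat; auto).
  assert (Rabs (H a) <= K * / INR N) by (eapply Rle_trans; [apply Ka|]; apply Rmult_le_compat_l; auto).
  assert (Rabs (H b) <= K * / INR N) by (eapply Rle_trans; [apply Kb|]; apply Rmult_le_compat_l; auto).
  replace (Int g a b + -1 * (H b - H a) - l) with ((Int g a b - l) - H b + H a) by ring.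
  eapply Rle_lt_trans. apply Rabs_triang. eapply Rle_lt_trans. apply Rplus_le_compat_r. apply Rabs_triang.
  rewrite Rabs_Ropp. nra.
Qed.

Lemma mvi (phi phi' : R -> R) a b B : (forall x, derivable_pt_lim phi x (phi' x)) ->
  (forall x, Rmin a b <= x <= Rmax a b -> Rabs (phi' x) <= B) ->
  Rabs (phi b - phi a) <= B * Rabs (b - a).
Proof.
  intros Hd HB. destruct (Rtotal_order a b) as [Hab|[Hab|Hab]].
  - destruct (MVT_cor2 phi phi' a b Hab) as [c [Hc Hc']]; auto.
    rewrite Hc, Rabs_mult. apply Rmult_le_compat_r. apply Rabs_pos.
    apply HB. rewrite Rmin_left, Rmax_right; lra.
  - subst. rewrite !Rminus_diag, Rabs_R0. rewrite Rmult_0_r; lra.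
  - destruct (MVT_cor2 phi phi' b a Hab) as [c [Hc Hc']]; auto.
    rewrite Rabs_minus_sym, (Rabs_minus_sym b), Hc, Rabs_mult. apply Rmult_le_compat_r. apply Rabs_pos.
    apply HB. rewrite Rmin_right, Rmax_left; lra.
Qed.

Lemma taylor2 phi phi1 phi2 y k B : (forall x, derivable_pt_lim phi x (phi1 x)) ->
  (forall x, derivable_pt_lim phi1 x (phi2 x)) ->
  (forall x, Rabs (x - y) <= Rabs k -> Rabs (phi2 x) <= B) ->
  Rabs (phi (y + k) - phi y - k * phi1 y) <= B * k ^ 2.
Proof.
  intros H1 H2 HB.
  set (psi := fun z => phi (y + z) - z * phi1 y).
  assert (Hpsi : forall z, derivable_pt_lim psi z (phi1 (y + z) - phi1 y)).
  { intros z. unfold psi. apply dpl_minus.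
    - eapply dpl_val; [|exact (derivable_pt_lim_comp (fun z => y + z) phi z 1 (phi1 (y + z)) ltac:(dpl_solve; ring) (H1 (y + z)))]. ring.
    - dpl_solve. ring. }
  assert (Hb : forall z, Rmin 0 k <= z <= Rmax 0 k -> Rabs (phi1 (y + z) - phi1 y) <= B * Rabs k).
  { intros z Hz. eapply Rle_trans. apply (mvi phi1 phi2 y (y + z) B H2).
    - intros x Hx. apply HB. unfold Rmin, Rmax in *.
      destruct (Rle_dec y (y + z)), (Rle_dec 0 k); apply Rabs_le; split;
        try (rewrite Rabs_right in * by lra); try (rewrite Rabs_left1 in * by lra); lra.
    - assert (0 <= B). { pose proof (HB y ltac:(rewrite Rminus_diag, Rabs_R0; apply Rabs_pos)). pose proof (Rabs_pos (phi2 y)); lra. }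
      apply Rmult_le_compat_l; auto. replace (y + z - y) with z by ring.
      unfold Rmin, Rmax in *. destruct (Rle_dec 0 k); apply Rabs_le; split;
        try (rewrite Rabs_right in * by lra); try (rewrite Rabs_left1 in * by lra); lra. }
  pose proof (mvi psi _ 0 k _ Hpsi Hb) as Hm.
  unfold psi in Hm. replace (y + 0) with y in Hm by ring.
  replace (phi (y + k) - k * phi1 y - (phi y - 0 * phi1 y)) with (phi (y + k) - phi y - k * phi1 y) in Hm by ring.
  rewrite Rminus_0_r in Hm. eapply Rle_trans; [apply Hm|]. rewrite Rmult_assoc, <- Rabs_mult.
  replace (k * k) with (k ^ 2) by ring. rewrite Rabs_right by (apply Rle_ge; apply pow2_ge_0). lra.
Qed.

Lemma imp_diff (f g : R -> R -> R) (F G : R -> R) M Mi s :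
  (forall s', continuity (f s')) -> continuity (g s) -> continuity M ->
  (forall s', improper_int (f s') (F s')) -> improper_int (g s) (G s) -> improper_int M Mi ->
  (forall h t, Rabs h <= 1 -> Rabs (f (s + h) t - f s t - h * g s t) <= h ^ 2 * M t) ->
  derivable_pt_lim F s (G s).
Proof.
  intros Hf Hg HM IF IG IM Hb.
  assert (Key : forall h, Rabs h <= 1 -> Rabs (F (s + h) - F s - h * G s) <= h ^ 2 * Mi).
  { intros h Hh.
    assert (C1 : continuity (fun t => f (s + h) t + -1 * f s t)).
    { apply cont_lin; auto. }
    pose proof (imp_lin _ _ _ _ (-1) (Hf (s + h)) (Hf s) (IF (s + h)) (IF s)) as I1.
    pose proof (imp_lin _ _ _ _ (- h) C1 Hg I1 IG) as I2.
    pose proof (imp_lin (fun _ => 0) M 0 Mi (h ^ 2) ltac:(reg) HM imp_zero IM) as I3.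
    replace (F (s + h) - F s - h * G s) with (F (s + h) + -1 * F s + - h * G s) by ring.
    replace (h ^ 2 * Mi) with (0 + h ^ 2 * Mi) by ring.
    eapply imp_bound; [| | exact I2 | exact I3 |].
    - apply cont_lin; auto.
    - apply cont_lin; auto. apply cont_const.
    - intros t. cbv beta. replace (f (s + h) t + -1 * f s t + - h * g s t) with (f (s + h) t - f s t - h * g s t) by ring.
      rewrite Rplus_0_l. apply Hb; auto. }
  assert (HMi : 0 <= Mi).
  { pose proof (Key 0 ltac:(rewrite Rabs_R0; lra)). 
    eapply Rle_trans; [|apply (imp_bound (fun _ => 0) M 0 Mi ltac:(reg) HM imp_zero IM)].
    apply Rabs_pos. intros t. pose proof (Hb 1 t ltac:(rewrite Rabs_R1; lra)). rewrite Rabs_R0.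
    eapply Rle_trans; [apply Rabs_pos|]. eapply Rle_trans; [apply H0|]. lra. }
  intros eps He.
  assert (Hd : 0 < Rmin 1 (eps / (Mi + 1))).
  { apply Rmin_pos; [lra|]. apply Rdiv_lt_0_compat; lra. }
  exists (mkposreal _ Hd). simpl. intros h Hh0 Hh.
  pose proof (Rmin_l 1 (eps / (Mi + 1))); pose proof (Rmin_r 1 (eps / (Mi + 1))).
  specialize (Key h ltac:(lra)).
  replace ((F (s + h) - F s) / h - G s) with ((F (s + h) - F s - h * G s) / h) by (field; auto).
  unfold Rdiv. rewrite Rabs_mult, Rabs_inv.
  assert (0 < Rabs h) by (apply Rabs_pos_lt; auto).
  apply Rle_lt_trans with (h ^ 2 * Mi * / Rabs h).
  { apply Rmult_le_compat_r; auto. left; apply Rinv_0_lt_compat; auto. }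
  replace (h ^ 2) with (Rabs h * Rabs h) by (rewrite <- Rabs_mult, Rabs_right; [ring|]; apply Rle_ge; nra).
  replace (Rabs h * Rabs h * Mi * / Rabs h) with (Rabs h * Mi) by (field; lra).
  assert (Rabs h * (Mi + 1) < eps).
  { apply Rlt_le_trans with (eps / (Mi + 1) * (Mi + 1)). apply Rmult_lt_compat_r; lra.
    right; field; lra. }
  nra.
Qed.

Lemma Int_diff (f g : R -> R -> R) M a b s :
  (forall s', continuity (f s')) -> continuity (g s) -> a <= b ->
  (forall h t, Rabs h <= 1 -> a <= t <= b -> Rabs (f (s + h) t - f s t - h * g s t) <= h ^ 2 * M) ->
  derivable_pt_lim (fun s' => Int (f s') a b) s (Int (g s) a b).
Proof.
  intros Hf Hg Hab Hb.
  assert (Key : forall h, Rabs h <= 1 -> Rabs (Int (f (s + h)) a b - Int (f s) a b - h * Int (g s) a b) <= h ^ 2 * (M * (b - a))).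
  { intros h Hh.
    assert (C1 : continuity (fun t => f (s + h) t + -1 * f s t)).
    { apply cont_lin; auto. }
    replace (Int (f (s + h)) a b - Int (f s) a b - h * Int (g s) a b) with (Int (fun t => (f (s + h) t + -1 * f s t) + - h * g s t) a b)
      by (rewrite Int_lin, Int_lin; auto; ring).
    eapply Rle_trans. apply (Int_bound _ (fun _ => h ^ 2 * M)); auto.
    - apply cont_lin; auto.
    - reg.
    - intros t Ht. replace (f (s + h) t + -1 * f s t + - h * g s t) with (f (s + h) t - f s t - h * g s t) by ring. auto.
    - rewrite (FTC (fun t => h ^ 2 * M * t)). right; ring. reg. intros; dpl_solve; ring. }
  assert (HMi : 0 <= M * (b - a)).
  { pose proof (Hb 1 a ltac:(rewrite Rabs_R1; lra) ltac:(lra)). pose proof (Rabs_pos (f (s + 1) a - f s a - 1 * g s a)).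
    assert (0 <= M) by lra. nra. }
  set (Mi := M * (b - a)) in *.
  intros eps He.
  assert (Hd : 0 < Rmin 1 (eps / (Mi + 1))).
  { apply Rmin_pos; [lra|]. apply Rdiv_lt_0_compat; lra. }
  exists (mkposreal _ Hd). simpl. intros h Hh0 Hh.
  pose proof (Rmin_l 1 (eps / (Mi + 1))); pose proof (Rmin_r 1 (eps / (Mi + 1))).
  specialize (Key h ltac:(lra)).
  replace ((Int (f (s + h)) a b - Int (f s) a b) / h - Int (g s) a b) with ((Int (f (s + h)) a b - Int (f s) a b - h * Int (g s) a b) / h) by (field; auto).
  unfold Rdiv. rewrite Rabs_mult, Rabs_inv.
  assert (0 < Rabs h) by (apply Rabs_pos_lt; auto).
  apply Rle_lt_trans with (h ^ 2 * Mi * / Rabs h).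
  { apply Rmult_le_compat_r; auto. left; apply Rinv_0_lt_compat; auto. }
  replace (h ^ 2) with (Rabs h * Rabs h) by (rewrite <- Rabs_mult, Rabs_right; [ring|]; apply Rle_ge; nra).
  replace (Rabs h * Rabs h * Mi * / Rabs h) with (Rabs h * Mi) by (field; lra).
  assert (Rabs h * (Mi + 1) < eps).
  { apply Rlt_le_trans with (eps / (Mi + 1) * (Mi + 1)). apply Rmult_lt_compat_r; lra.
    right; field; lra. }
  nra.
Qed.

Definition ge (p t : R) : R := exp (- t ^ 2 / 2 + p * t).

Definition IntR (f : R -> R) : R := epsilon (inhabits 0) (improper_int f).
Lemma IntR_spec f : (exists l, improper_int f l) -> improper_int f (IntR f).
Proof. intros H. unfold IntR. apply epsilon_spec. auto. Qed.

Lemma ge_pos p t : 0 < ge p t.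
Proof. apply exp_pos. Qed.

Lemma abs_le_exp t : Rabs t <= exp (Rabs t).
Proof. pose proof (exp_ineq1_le (Rabs t)). lra. Qed.

Lemma sq_le_exp t : t ^ 2 <= 4 * exp (Rabs t).
Proof.
  pose proof (exp_ineq1_le (Rabs t / 2)).
  assert (E : exp (Rabs t) = exp (Rabs t / 2) * exp (Rabs t / 2)) by (rewrite <- exp_plus; f_equal; field).
  rewrite E. pose proof (Rabs_pos t).
  replace (t ^ 2) with (Rabs t * Rabs t) by (rewrite <- Rabs_mult; rewrite Rabs_right; [ring| apply Rle_ge; nra]).
  nra.
Qed.

Lemma dom p j c f : 0 <= j -> (forall t, Rabs (f t) <= c * (ge p t * exp (j * Rabs t))) ->
  forall t, Rabs (f t) <= (c * exp ((Rabs p + j + 1) ^ 2 / 2)) * exp (- Rabs t).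
Proof.
  intros Hj H t. eapply Rle_trans; [apply H|].
  assert (Hc : 0 <= c). { pose proof (H 0). pose proof (Rabs_pos (f 0)). pose proof (ge_pos p 0). pose proof (exp_pos (j * Rabs 0)).
    assert (0 <= c * (ge p 0 * exp (j * Rabs 0))) by lra. 
    destruct (Rle_dec 0 c); auto. assert (0 < ge p 0 * exp (j * Rabs 0)) by (apply Rmult_lt_0_compat; auto). nra. }
  rewrite Rmult_assoc. apply Rmult_le_compat_l; auto.
  unfold ge. rewrite <- !exp_plus. apply exp_le_exp.
  pose proof (Rabs_pos t). pose proof (Rabs_pos p).
  assert (p * t <= Rabs p * Rabs t) by (rewrite <- Rabs_mult; apply Rle_abs).
  assert (t ^ 2 = Rabs t ^ 2) by (unfold Rabs; destruct (Rcase_abs t); ring).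
  pose proof (pow2_ge_0 (Rabs t - (Rabs p + j + 1))). rewrite H3. nra.
Qed.

Ltac creg := unfold ge; reg.

Lemma cos_le1 x : Rabs (cos x) <= 1.
Proof. apply Rabs_le. pose proof (COS_bound x). lra. Qed.
Lemma sin_le1 x : Rabs (sin x) <= 1.
Proof. apply Rabs_le. pose proof (SIN_bound x). lra. Qed.

Definition Cf p q := IntR (fun t => ge p t * cos (q * t)).
Definition Sf p q := IntR (fun t => ge p t * sin (q * t)).

Lemma IC p q : improper_int (fun t => ge p t * cos (q * t)) (Cf p q).
Proof.
  apply IntR_spec. eapply imp_exists. creg. apply (dom p 0 1); [lra|].
  intros t. rewrite Rabs_mult, Rmult_0_l, exp_0, Rmult_1_r, Rmult_1_l, (Rabs_right (ge p t)) by (apply Rle_ge; left; apply ge_pos).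
  pose proof (cos_le1 (q * t)). pose proof (ge_pos p t). nra.
Qed.

Lemma IS p q : improper_int (fun t => ge p t * sin (q * t)) (Sf p q).
Proof.
  apply IntR_spec. eapply imp_exists. creg. apply (dom p 0 1); [lra|].
  intros t. rewrite Rabs_mult, Rmult_0_l, exp_0, Rmult_1_r, Rmult_1_l, (Rabs_right (ge p t)) by (apply Rle_ge; left; apply ge_pos).
  pose proof (sin_le1 (q * t)). pose proof (ge_pos p t). nra.
Qed.

Lemma dge p t : derivable_pt_lim (fun t => ge p t) t ((p - t) * ge p t).
Proof. unfold ge. dpl_solve. field. Qed.

Lemma imp_val f l l' : l = l' -> improper_int f l -> improper_int f l'.
Proof. intros ->; auto. Qed.

Lemma imp_scal f l c : continuity f -> improper_int f l -> improper_int (fun t => c * f t) (c * l).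
Proof.
  intros Hf I. pose proof (imp_lin _ _ _ _ c (cont_const 0) Hf imp_zero I).
  eapply imp_ext; [|replace (c * l) with (0 + c * l) by ring; exact H]. intros; simpl; ring.
Qed.

Lemma ge_dom p t : Rabs (ge p t) <= (1 * exp ((Rabs p + 0 + 1) ^ 2 / 2)) * exp (- Rabs t).
Proof. apply (dom p 0 1 (ge p)); [lra|]. intros. rewrite Rmult_0_l, exp_0, Rmult_1_r, Rmult_1_l. right; apply Rabs_right, Rle_ge; left; apply ge_pos. Qed.

Lemma ge_sin_dom p q t : Rabs (ge p t * sin (q * t)) <= (1 * exp ((Rabs p + 0 + 1) ^ 2 / 2)) * exp (- Rabs t).
Proof.
  eapply Rle_trans; [|apply ge_dom]. rewrite Rabs_mult. pose proof (sin_le1 (q * t)). pose proof (Rabs_pos (ge p t)). nra.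
Qed.
Lemma ge_cos_dom p q t : Rabs (ge p t * cos (q * t)) <= (1 * exp ((Rabs p + 0 + 1) ^ 2 / 2)) * exp (- Rabs t).
Proof.
  eapply Rle_trans; [|apply ge_dom]. rewrite Rabs_mult. pose proof (cos_le1 (q * t)). pose proof (Rabs_pos (ge p t)). nra.
Qed.

Lemma IT_sin p q : improper_int (fun t => t * (ge p t * sin (q * t))) (p * Sf p q + q * Cf p q).
Proof.
  eapply (imp_deriv _ (fun t => ge p t * sin (q * t) * p + q * (ge p t * cos (q * t)))
            (fun t => (p - t) * ge p t * sin (q * t) + ge p t * (cos (q * t) * q)) (fun t => ge p t * sin (q * t))).
  - creg.
  - creg.
  - creg.
  - intros t. eapply dpl_val; [|apply dpl_mult; [apply dge| apply dpl_sin; dpl_solve; reflexivity]]. cbv beta; ring.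
  - intros t. ring.
  - eapply imp_lin; [creg|creg| |apply IC]. eapply imp_ext; [|apply (imp_scal (fun t => ge p t * sin (q * t)) _ p); [creg|apply IS]]. intros; simpl; ring.
  - apply ge_sin_dom.
Qed.

Lemma IT_cos p q : improper_int (fun t => t * (ge p t * cos (q * t))) (p * Cf p q - q * Sf p q).
Proof.
  eapply (imp_deriv _ (fun t => ge p t * cos (q * t) * p + (- q) * (ge p t * sin (q * t)))
            (fun t => (p - t) * ge p t * cos (q * t) + ge p t * (- sin (q * t) * q)) (fun t => ge p t * cos (q * t))).
  - creg.
  - creg.
  - creg.
  - intros t. eapply dpl_val; [|apply dpl_mult; [apply dge| apply dpl_cos; dpl_solve; reflexivity]]. cbv beta; ring.
  - intros t. ring.
  - replace (p * Cf p q - q * Sf p q) with (p * Cf p q + - q * Sf p q) by ring.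
    eapply imp_lin; [creg|creg| |apply IS]. eapply imp_ext; [|apply (imp_scal (fun t => ge p t * cos (q * t)) _ p); [creg|apply IC]]. intros; simpl; ring.
  - apply ge_cos_dom.
Qed.

Definition Mq p t := ge p t * t ^ 2.
Lemma IMq p : improper_int (Mq p) (IntR (Mq p)).
Proof.
  apply IntR_spec. eapply imp_exists. unfold Mq; creg. apply (dom p 1 4); [lra|].
  intros t. unfold Mq. rewrite Rabs_mult, Rmult_1_l, (Rabs_right (ge p t)) by (apply Rle_ge; left; apply ge_pos).
  rewrite Rabs_right by (apply Rle_ge, pow2_ge_0). pose proof (sq_le_exp t). pose proof (ge_pos p t). nra.
Qed.

Lemma taylor_cos q h t : Rabs (cos ((q + h) * t) - cos (q * t) - h * (- t * sin (q * t))) <= h ^ 2 * t ^ 2.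
Proof.
  pose proof (taylor2 (fun s => cos (s * t)) (fun s => - t * sin (s * t)) (fun s => - t ^ 2 * cos (s * t)) q h (t ^ 2)) as T.
  replace (h ^ 2 * t ^ 2) with (t ^ 2 * h ^ 2) by ring. apply T.
  - intros x. dpl_solve. ring.
  - intros x. eapply dpl_val; [|apply (dpl_mult (fun _ => - t)); [apply dpl_const| apply dpl_sin; dpl_solve; reflexivity]]. simpl; ring.
  - intros x _. rewrite Rabs_mult. pose proof (cos_le1 (x * t)).
    rewrite Rabs_Ropp, Rabs_right by (apply Rle_ge, pow2_ge_0). pose proof (pow2_ge_0 t). nra.
Qed.

Lemma taylor_sin q h t : Rabs (sin ((q + h) * t) - sin (q * t) - h * (t * cos (q * t))) <= h ^ 2 * t ^ 2.
Proof.
  pose proof (taylor2 (fun s => sin (s * t)) (fun s => t * cos (s * t)) (fun s => - t ^ 2 * sin (s * t)) q h (t ^ 2)) as T.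
  replace (h ^ 2 * t ^ 2) with (t ^ 2 * h ^ 2) by ring. apply T.
  - intros x. dpl_solve. ring.
  - intros x. eapply dpl_val; [|apply (dpl_mult (fun _ => t)); [apply dpl_const| apply dpl_cos; dpl_solve; reflexivity]]. simpl; ring.
  - intros x _. rewrite Rabs_mult. pose proof (sin_le1 (x * t)).
    rewrite Rabs_Ropp, Rabs_right by (apply Rle_ge, pow2_ge_0). pose proof (pow2_ge_0 t). nra.
Qed.

Lemma dCq p q : derivable_pt_lim (fun s => Cf p s) q (- (p * Sf p q + q * Cf p q)).
Proof.
  apply (imp_diff (fun s t => ge p t * cos (s * t)) (fun s t => - t * (ge p t * sin (s * t)))
                  (fun s => Cf p s) (fun s => - (p * Sf p s + s * Cf p s)) (Mq p) (IntR (Mq p)) q).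
  - intros; creg.
  - creg.
  - unfold Mq; creg.
  - intros; apply IC.
  - eapply imp_ext; [|eapply imp_val; [|apply (imp_scal (fun t => t * (ge p t * sin (q * t))) (p * Sf p q + q * Cf p q) (-1)); [creg|apply IT_sin]]].
    intros; simpl; ring. simpl; ring.
  - apply IMq.
  - intros h t _. unfold Mq. pose proof (taylor_cos q h t). pose proof (ge_pos p t).
    replace (ge p t * cos ((q + h) * t) - ge p t * cos (q * t) - h * (- t * (ge p t * sin (q * t))))
      with (ge p t * (cos ((q + h) * t) - cos (q * t) - h * (- t * sin (q * t)))) by ring.
    rewrite Rabs_mult, Rabs_right by lra. 
    replace (h ^ 2 * (ge p t * t ^ 2)) with (ge p t * (h ^ 2 * t ^ 2)) by ring.
    apply Rmult_le_compat_l; lra.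
Qed.

Lemma dSq p q : derivable_pt_lim (fun s => Sf p s) q (p * Cf p q - q * Sf p q).
Proof.
  apply (imp_diff (fun s t => ge p t * sin (s * t)) (fun s t => t * (ge p t * cos (s * t)))
                  (fun s => Sf p s) (fun s => p * Cf p s - s * Sf p s) (Mq p) (IntR (Mq p)) q).
  - intros; creg.
  - creg.
  - unfold Mq; creg.
  - intros; apply IS.
  - apply IT_cos.
  - apply IMq.
  - intros h t _. unfold Mq. pose proof (taylor_sin q h t). pose proof (ge_pos p t).
    replace (ge p t * sin ((q + h) * t) - ge p t * sin (q * t) - h * (t * (ge p t * cos (q * t))))
      with (ge p t * (sin ((q + h) * t) - sin (q * t) - h * (t * cos (q * t)))) by ring.
    rewrite Rabs_mult, Rabs_right by lra. 
    replace (h ^ 2 * (ge p t * t ^ 2)) with (ge p t * (h ^ 2 * t ^ 2)) by ring.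
    apply Rmult_le_compat_l; lra.
Qed.

Lemma S0 p : Sf p 0 = 0.
Proof.
  apply (imp_unique (fun t => ge p t * sin (0 * t))). apply IS.
  eapply imp_ext; [|apply imp_zero]. intros; simpl. rewrite Rmult_0_l, sin_0; ring.
Qed.

Ltac dpl_solve2 := eapply dpl_val; [|repeat (first [dpl_step | apply dCq | apply dSq])]; cbv beta.

Lemma XY p q : exp (q ^ 2 / 2) * (Cf p q * cos (p * q) + Sf p q * sin (p * q)) = Cf p 0 /\
               exp (q ^ 2 / 2) * (Sf p q * cos (p * q) - Cf p q * sin (p * q)) = 0.
Proof.
  split.
  - pose proof (deriv_zero_const (fun q => exp (q ^ 2 / 2) * (Cf p q * cos (p * q) + Sf p q * sin (p * q))) 0 q) as H.
    cbv beta in H. rewrite H.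
    + rewrite S0. replace (0 ^ 2 / 2) with 0 by field. rewrite Rmult_0_r, exp_0, cos_0, sin_0. ring.
    + intros x. dpl_solve2. field.
  - pose proof (deriv_zero_const (fun q => exp (q ^ 2 / 2) * (Sf p q * cos (p * q) - Cf p q * sin (p * q))) 0 q) as H.
    cbv beta in H. rewrite H.
    + rewrite S0. replace (0 ^ 2 / 2) with 0 by field. rewrite Rmult_0_r, exp_0, cos_0, sin_0. ring.
    + intros x. dpl_solve2. field.
Qed.

Definition Mp s t := ge s t * exp (Rabs t) * t ^ 2.
Lemma cont_expabs : continuity (fun t => exp (Rabs t)).
Proof.
  intros x. apply (continuity_pt_comp Rabs exp). apply Rcontinuity_abs.
  apply derivable_continuous_pt, derivable_pt_exp.
Qed.
Lemma cont_Mp s : continuity (Mp s).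
Proof.
  unfold Mp. apply cont_mult; [apply cont_mult|]; [creg|apply cont_expabs|reg].
Qed.

Lemma IMp s : improper_int (Mp s) (IntR (Mp s)).
Proof.
  apply IntR_spec. eapply imp_exists. apply cont_Mp. apply (dom s 2 4); [lra|].
  intros t. unfold Mp. pose proof (ge_pos s t). pose proof (exp_pos (Rabs t)). pose proof (sq_le_exp t).
  rewrite Rabs_right. 2: { apply Rle_ge. pose proof (pow2_ge_0 t). apply Rmult_le_pos; [|auto]. left; apply Rmult_lt_0_compat; auto. }
  replace (exp (2 * Rabs t)) with (exp (Rabs t) * exp (Rabs t)) by (rewrite <- exp_plus; f_equal; ring).
  assert (0 < ge s t * exp (Rabs t)) by (apply Rmult_lt_0_compat; auto). nra.
Qed.

Lemma dD s : derivable_pt_lim (fun s => Cf s 0) s (s * Cf s 0).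
Proof.
  apply (imp_diff (fun s t => ge s t * cos (0 * t)) (fun s t => t * (ge s t * cos (0 * t)))
                  (fun s => Cf s 0) (fun s => s * Cf s 0) (Mp s) (IntR (Mp s)) s).
  - intros; creg.
  - creg.
  - apply cont_Mp.
  - intros; apply IC.
  - eapply imp_val; [|apply IT_cos]. ring.
  - apply IMp.
  - intros h t Hh. unfold Mp. rewrite Rmult_0_l, cos_0, !Rmult_1_r.
    pose proof (taylor2 (fun x => ge x t) (fun x => t * ge x t) (fun x => t ^ 2 * ge x t) s h (t ^ 2 * (ge s t * exp (Rabs t)))) as T.
    replace (h ^ 2 * (ge s t * exp (Rabs t) * t ^ 2)) with (t ^ 2 * (ge s t * exp (Rabs t)) * h ^ 2) by ring.
    apply T.
    + intros x. unfold ge. dpl_solve. field.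
    + intros x. unfold ge. dpl_solve. field.
    + intros x Hx. rewrite Rabs_mult, Rabs_right by (apply Rle_ge, pow2_ge_0).
      rewrite (Rabs_right (ge x t)) by (apply Rle_ge; left; apply ge_pos).
      apply Rmult_le_compat_l. apply pow2_ge_0.
      unfold ge. rewrite <- exp_plus. apply exp_le_exp.
      assert ((x - s) * t <= Rabs t).
      { eapply Rle_trans. apply Rle_abs. rewrite Rabs_mult. pose proof (Rabs_pos t). nra. }
      lra.
Qed.

Lemma D_formula p : Cf p 0 = exp (p ^ 2 / 2) * Cf 0 0.
Proof.
  assert (Hd : forall x, derivable_pt_lim (fun p => exp (- (p ^ 2 / 2)) * Cf p 0) x 0).
  { intros x. eapply dpl_val; [|apply dpl_mult; [apply dpl_exp; dpl_solve; reflexivity| apply dD]].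
    cbv beta. field. }
  pose proof (deriv_zero_const (fun p => exp (- (p ^ 2 / 2)) * Cf p 0) 0 p Hd) as H.
  cbv beta in H. replace (0 ^ 2 / 2) with 0 in H by field. rewrite Ropp_0, exp_0, Rmult_1_l in H.
  rewrite <- H. rewrite <- Rmult_assoc, <- exp_plus. replace (p ^ 2 / 2 + - (p ^ 2 / 2)) with 0 by ring.
  rewrite exp_0; ring.
Qed.

Lemma gauss_CS p q : Cf p q = Cf 0 0 * exp ((p ^ 2 - q ^ 2) / 2) * cos (p * q) /\
                     Sf p q = Cf 0 0 * exp ((p ^ 2 - q ^ 2) / 2) * sin (p * q).
Proof.
  destruct (XY p q) as [X Y]. rewrite D_formula in X.
  set (e := exp (q ^ 2 / 2)) in *. assert (He : 0 < e) by apply exp_pos.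
  pose proof (sin2_cos2 (p * q)) as SC. unfold Rsqr in SC.
  assert (E : exp ((p ^ 2 - q ^ 2) / 2) = exp (p ^ 2 / 2) / e).
  { unfold e. unfold Rdiv at 2. rewrite <- exp_Ropp, <- exp_plus. f_equal. field. }
  rewrite E.
  assert (HC : e * Cf p q = cos (p * q) * (e * (Cf p q * cos (p * q) + Sf p q * sin (p * q))) - sin (p * q) * (e * (Sf p q * cos (p * q) - Cf p q * sin (p * q)))).
  { transitivity (e * Cf p q * (sin (p * q) * sin (p * q) + cos (p * q) * cos (p * q))). rewrite SC; ring. ring. }
  assert (HS : e * Sf p q = sin (p * q) * (e * (Cf p q * cos (p * q) + Sf p q * sin (p * q))) + cos (p * q) * (e * (Sf p q * cos (p * q) - Cf p q * sin (p * q)))).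
  { transitivity (e * Sf p q * (sin (p * q) * sin (p * q) + cos (p * q) * cos (p * q))). rewrite SC; ring. ring. }
  rewrite X, Y in HC, HS. split.
  - apply (Rmult_eq_reg_l e); [|lra]. rewrite HC. field. lra.
  - apply (Rmult_eq_reg_l e); [|lra]. rewrite HS. field. lra.
Qed.

Definition g0 (x : R) := exp (- x ^ 2 / 2).
Definition Bf (s x : R) := exp (- s ^ 2 * (1 + x ^ 2) / 2) / (1 + x ^ 2).
Definition Bd (s x : R) := - s * exp (- s ^ 2 * (1 + x ^ 2) / 2).

Lemma pos1x2 x : 0 < 1 + x ^ 2.
Proof. pose proof (pow2_ge_0 x); lra. Qed.

Lemma cont_Bf s : continuity (Bf s).
Proof. unfold Bf. intros x. apply continuity_pt_div; [reg|reg|]. pose proof (pos1x2 x); lra. Qed.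

Lemma B0 : Int (Bf 0) (-1) 1 = PI / 2.
Proof.
  rewrite (Int_ext _ (fun x => / (1 + x ^ 2))).
  2: { intros x. unfold Bf. replace (- 0 ^ 2 * (1 + x ^ 2) / 2) with 0 by field. rewrite exp_0. field. pose proof (pos1x2 x); lra. }
  rewrite (FTC atan).
  - replace (-1) with (- (1)) by ring. rewrite atan_opp, atan_1. field.
  - intros x. apply continuity_pt_inv; [reg|]. pose proof (pos1x2 x); lra.
  - apply derivable_pt_lim_atan.
Qed.

Lemma dB s : derivable_pt_lim (fun s => Int (Bf s) (-1) 1) s (Int (Bd s) (-1) 1).
Proof.
  apply (Int_diff Bf Bd (2 * (Rabs s + 1) ^ 2 + 1)).
  - apply cont_Bf.
  - unfold Bd; reg.
  - lra.
  - intros h x Hh Hx.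
    assert (Hw : 1 <= 1 + x ^ 2 <= 2) by (split; nra).
    set (w := 1 + x ^ 2) in *.
    pose proof (taylor2 (fun y => exp (- y ^ 2 * w / 2) / w) (fun y => - y * exp (- y ^ 2 * w / 2))
                 (fun y => (y ^ 2 * w - 1) * exp (- y ^ 2 * w / 2)) s h (2 * (Rabs s + 1) ^ 2 + 1)) as T.
    unfold Bf, Bd. fold w. replace (h ^ 2 * (2 * (Rabs s + 1) ^ 2 + 1)) with ((2 * (Rabs s + 1) ^ 2 + 1) * h ^ 2) by ring. cbv beta in T. apply T.
    + intros y. dpl_solve. field. lra.
    + intros y. dpl_solve. field.
    + intros y Hy. rewrite Rabs_mult.
      assert (E1 : Rabs (exp (- y ^ 2 * w / 2)) <= 1).
      { rewrite Rabs_right by (apply Rle_ge; left; apply exp_pos). rewrite <- exp_0. apply exp_le_exp.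
        pose proof (pow2_ge_0 y). nra. }
      assert (E2 : Rabs (y ^ 2 * w - 1) <= 2 * (Rabs s + 1) ^ 2 + 1).
      { assert (Hy2 : y ^ 2 <= (Rabs s + 1) ^ 2).
        { assert (Rabs y <= Rabs s + 1).
          { replace y with (s + (y - s)) by ring. eapply Rle_trans. apply Rabs_triang. lra. }
          replace (y ^ 2) with (Rabs y ^ 2) by (unfold Rabs; destruct (Rcase_abs y); ring).
          pose proof (Rabs_pos y). nra. }
        apply Rabs_le. pose proof (pow2_ge_0 y). split; nra. }
      pose proof (Rabs_pos (y ^ 2 * w - 1)). pose proof (Rabs_pos (exp (- y ^ 2 * w / 2))). nra.
Qed.

Lemma cont_g0 : continuity g0.
Proof. unfold g0; reg. Qed.

Lemma subst s : Int (fun x => s * g0 (s * x)) (-1) 1 = Int g0 (- s) s.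
Proof.
  rewrite (FTC (fun x => Int g0 0 (s * x))).
  - replace (s * -1) with (- s) by ring. rewrite Rmult_1_r. rewrite <- (Int_chasles g0 0 (- s) s cont_g0). ring.
  - unfold g0; reg.
  - intros x. eapply dpl_val; [|exact (derivable_pt_lim_comp (fun x => s * x) (fun y => Int g0 0 y) x s (g0 (s * x))
        ltac:(dpl_solve; ring) (Int_prim_deriv g0 0 (s * x) cont_g0))]. ring.
Qed.

Lemma Bd_eq s : Int (Bd s) (-1) 1 = - exp (- s ^ 2 / 2) * Int g0 (- s) s.
Proof.
  rewrite (Int_ext _ (fun x => (- exp (- s ^ 2 / 2)) * (s * g0 (s * x)))).
  - rewrite Int_scal. rewrite subst. ring. unfold g0; reg.
  - intros x. unfold Bd, g0. replace (- exp (- s ^ 2 / 2) * (s * exp (- (s * x) ^ 2 / 2))) with (- s * (exp (- s ^ 2 / 2) * exp (- (s * x) ^ 2 / 2))) by ring.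
    rewrite <- exp_plus. f_equal. f_equal. field.
Qed.

Lemma A_deriv s : derivable_pt_lim (fun s => Int g0 (- s) s) s (2 * g0 s).
Proof.
  apply derivable_pt_lim_locally_ext with (f := fun s => Int g0 0 s - Int g0 0 (- s)) (a := s - 1) (b := s + 1).
  - lra.
  - intros z _. rewrite <- (Int_chasles g0 0 (- z) z cont_g0). ring.
  - eapply dpl_val; [|apply dpl_minus; [apply Int_prim_deriv, cont_g0|]].
    2: { exact (derivable_pt_lim_comp (fun s => - s) (fun y => Int g0 0 y) s (-1) (g0 (- s))
        ltac:(dpl_solve; ring) (Int_prim_deriv g0 0 (- s) cont_g0)). }
    unfold g0. replace ((- s) ^ 2) with (s ^ 2) by ring. ring.
Qed.

Lemma W_const s : (Int g0 (- s) s) ^ 2 / 4 + Int (Bf s) (-1) 1 = PI / 2.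
Proof.
  assert (Hd : forall x, derivable_pt_lim (fun s => (Int g0 (- s) s) ^ 2 / 4 + Int (Bf s) (-1) 1) x 0).
  { intros x. eapply dpl_val; [|apply dpl_plus; [apply dpl_div_const, dpl_pow2, A_deriv| apply dB]].
    rewrite Bd_eq. unfold g0. field. }
  pose proof (deriv_zero_const _ 0 s Hd) as H. cbv beta in H. rewrite H.
  replace (- 0) with 0 by ring. rewrite Int_refl, B0 by apply cont_g0. field.
Qed.

Lemma B_bound s : Rabs (Int (Bf s) (-1) 1) <= 2 * exp (- s ^ 2 / 2).
Proof.
  eapply Rle_trans. apply (Int_bound _ (fun _ => exp (- s ^ 2 / 2))); [apply cont_Bf|reg|lra|].
  - intros x Hx. unfold Bf. pose proof (pos1x2 x). pose proof (exp_pos (- s ^ 2 * (1 + x ^ 2) / 2)).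
    rewrite Rabs_right by (apply Rle_ge; left; apply Rdiv_lt_0_compat; auto).
    apply Rle_trans with (exp (- s ^ 2 * (1 + x ^ 2) / 2)).
    + unfold Rdiv. rewrite <- (Rmult_1_r (exp _)) at 2. apply Rmult_le_compat_l; [lra|].
      rewrite <- Rinv_1. apply Rinv_le_contravar; [lra|]. pose proof (pow2_ge_0 x); lra.
    + apply exp_le_exp. pose proof (pow2_ge_0 s). pose proof (pow2_ge_0 x). nra.
  - rewrite (FTC (fun t => exp (- s ^ 2 / 2) * t)). right; ring. reg. intros; dpl_solve; field.
Qed.

Lemma Ig0 : improper_int g0 (Cf 0 0).
Proof.
  eapply imp_ext; [|apply IC]. intros t. unfold ge, g0. rewrite !Rmult_0_l, cos_0, Rplus_0_r, Rmult_1_r. reflexivity.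
Qed.

Lemma D0_val : Cf 0 0 = sqrt (2 * PI).
Proof.
  set (D0 := Cf 0 0).
  assert (Hpos : 0 <= D0).
  { pose proof (imp_bound (fun _ => 0) g0 0 D0 (cont_const 0) cont_g0 imp_zero Ig0) as H.
    rewrite Rabs_R0 in H. apply H. intros t. rewrite Rabs_R0. left; apply exp_pos. }
  assert (Hsq : D0 ^ 2 = 2 * PI).
  { destruct (Req_dec (D0 ^ 2) (2 * PI)) as [E|NE]; auto. exfalso.
    set (delta := Rabs (D0 ^ 2 - 2 * PI)). assert (Hd : 0 < delta) by (apply Rabs_pos_lt; lra).
    set (eps := Rmin 1 (delta / (4 * (2 * Rabs D0 + 1)))).
    pose proof (Rabs_pos D0) as HD0.
    assert (He : 0 < eps). { apply Rmin_pos; [lra|]. apply Rdiv_lt_0_compat; lra. }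
    assert (He1 : eps <= 1) by apply Rmin_l.
    assert (He2 : eps * (4 * (2 * Rabs D0 + 1)) <= delta).
    { apply Rle_trans with (delta / (4 * (2 * Rabs D0 + 1)) * (4 * (2 * Rabs D0 + 1))).
      apply Rmult_le_compat_r; [lra|apply Rmin_r]. right; field; lra. }
    destruct (imp_elim g0 D0 Ig0 eps He) as [M [HM HMb]].
    set (s := Rmax M (32 / delta + 1)).
    assert (Hs1 : M <= s) by apply Rmax_l. assert (Hs2 : 32 / delta + 1 <= s) by apply Rmax_r.
    assert (H16 : 0 < 32 / delta) by (apply Rdiv_lt_0_compat; lra).
    specialize (HMb (- s) s ltac:(lra) ltac:(lra)).
    set (A := Int g0 (- s) s) in *.
    pose proof (W_const s) as W. fold A in W. pose proof (B_bound s) as BB.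
    assert (Hexp : 8 * exp (- s ^ 2 / 2) <= delta / 2).
    { assert (Hp : 0 < s ^ 2 / 2) by nra.
      pose proof (exp_neg_le (s ^ 2 / 2) Hp). replace (- s ^ 2 / 2) with (- (s ^ 2 / 2)) by field.
      assert (Hs16 : 16 / delta <= s ^ 2 / 2).
      { assert (s * s >= s) by nra. 
        assert (16 / delta = (32 / delta) / 2) by (field; lra). nra. }
      assert (/ (s ^ 2 / 2) <= delta / 16).
      { replace (delta / 16) with (/ (16 / delta)) by (field; lra). apply Rinv_le_contravar; auto. 
        apply Rdiv_lt_0_compat; lra. }
      lra. }
    assert (E1 : Rabs (D0 ^ 2 - A ^ 2) <= delta / 4).
    { replace (D0 ^ 2 - A ^ 2) with ((D0 - A) * (D0 + A)) by ring. rewrite Rabs_mult.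
      rewrite Rabs_minus_sym.
      assert (Rabs (D0 + A) <= 2 * Rabs D0 + 1).
      { replace (D0 + A) with (2 * D0 + (A - D0)) by ring. eapply Rle_trans. apply Rabs_triang.
        rewrite Rabs_mult, (Rabs_right 2) by lra. lra. }
      pose proof (Rabs_pos (D0 + A)). pose proof (Rabs_pos (A - D0)). nra. }
    assert (E2 : Rabs (A ^ 2 - 2 * PI) <= delta / 2).
    { replace (A ^ 2 - 2 * PI) with (- 4 * Int (Bf s) (-1) 1) by lra.
      rewrite Rabs_mult, Rabs_left by lra. lra. }
    assert (delta <= delta / 4 + delta / 2).
    { unfold delta at 1. replace (D0 ^ 2 - 2 * PI) with ((D0 ^ 2 - A ^ 2) + (A ^ 2 - 2 * PI)) by ring.
      eapply Rle_trans. apply Rabs_triang. lra. }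
    lra. }
  rewrite <- Hsq. rewrite sqrt_pow2; auto.
Qed.

Theorem gauss1 p q : improper_int (fun t => ge p t * cos (q * t)) (sqrt (2 * PI) * exp ((p ^ 2 - q ^ 2) / 2) * cos (p * q)) /\ improper_int (fun t => ge p t * sin (q * t)) (sqrt (2 * PI) * exp ((p ^ 2 - q ^ 2) / 2) * sin (p * q)).
Proof.
  destruct (gauss_CS p q) as [E1 E2]. rewrite D0_val in E1, E2. rewrite <- E1, <- E2. split; [apply IC|apply IS].
Qed.

Definition C1 : C := mkC 1 0.
Definition Copp (z : C) : C := mkC (- Re z) (- Im z).
Definition Csub (z w : C) : C := Cadd z (Copp w).

Lemma C_ext z w : Re z = Re w -> Im z = Im w -> z = w.
Proof. destruct z, w; simpl; intros; subst; auto. Qed.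

Lemma Cring : ring_theory C0 C1 Cadd Cmul Csub Copp (@eq C).
Proof.
  constructor; intros; apply C_ext; simpl; ring.
Qed.
Add Ring CRing : Cring.

Lemma Cexp_add a b : Cexp (Cadd a b) = Cmul (Cexp a) (Cexp b).
Proof.
  apply C_ext; simpl; rewrite exp_plus; [rewrite cos_plus|rewrite sin_plus]; ring.
Qed.
Lemma Cexp_C0 : Cexp C0 = C1.
Proof. apply C_ext; simpl; rewrite ?exp_0, ?cos_0, ?sin_0; ring. Qed.
Lemma Cofr_exp r : Cofr (exp r) = Cexp (Cofr r).
Proof. apply C_ext; simpl; rewrite ?cos_0, ?sin_0; ring. Qed.
Lemma Cofr_add a b : Cofr (a + b) = Cadd (Cofr a) (Cofr b).
Proof. apply C_ext; simpl; ring. Qed.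
Lemma Cofr_mul a b : Cofr (a * b) = Cmul (Cofr a) (Cofr b).
Proof. apply C_ext; simpl; ring. Qed.
Lemma Cofr_1 : Cofr 1 = C1.
Proof. reflexivity. Qed.
Lemma Cscale_mul r z : Cscale r z = Cmul (Cofr r) z.
Proof. apply C_ext; simpl; ring. Qed.

Lemma Csum_ext n f g : (forall i, (i < n)%nat -> f i = g i) -> Csum_upto n f = Csum_upto n g.
Proof.
  induction n; simpl; intros H; auto. rewrite IHn by (intros; apply H; lia). rewrite H by lia. auto.
Qed.
Lemma Csum_add n f g : Csum_upto n (fun i => Cadd (f i) (g i)) = Cadd (Csum_upto n f) (Csum_upto n g).
Proof. induction n; simpl. apply C_ext; simpl; ring. rewrite IHn. ring. Qed.
Lemma Csum_scal n c f : Csum_upto n (fun i => Cmul c (f i)) = Cmul c (Csum_upto n f).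
Proof. induction n; simpl. apply C_ext; simpl; ring. rewrite IHn. ring. Qed.
Lemma Cofr_Rsum n f : Cofr (Rsum_upto n f) = Csum_upto n (fun i => Cofr (f i)).
Proof. induction n; simpl. reflexivity. rewrite Cofr_add, IHn. auto. Qed.

Lemma Int_plus_gen f g a b (pr1 : Riemann_integrable f a b) (pr2 : Riemann_integrable g a b) :
  Int (fun x => f x + g x) a b = Int f a b + Int g a b.
Proof.
  rewrite (Int_ext _ (fun x => f x + 1 * g x)) by (intros; ring).
  rewrite (Int_eq _ _ _ (RiemannInt_P10 1 pr1 pr2)), (RiemannInt_P13 pr1 pr2), <- !Int_eq. ring.
Qed.

Lemma imp_add_gen f g l1 l2 : improper_int f l1 -> improper_int g l2 -> improper_int (fun t => f t + g t) (l1 + l2).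
Proof.
  intros I1 I2. split.
  - intros a b. destruct (proj1 I1 a b) as [p1]. destruct (proj1 I2 a b) as [p2]. constructor.
    apply (Riemann_integrable_ext (f := fun x => f x + 1 * g x)). intros; ring. apply RiemannInt_P10; auto.
  - intros eps He.
    destruct (imp_elim f l1 I1 (eps/2)) as [M1 [HM1 H1]]; [lra|].
    destruct (imp_elim g l2 I2 (eps/2)) as [M2 [HM2 H2]]; [lra|].
    exists (Rmax M1 M2). pose proof (Rmax_l M1 M2); pose proof (Rmax_r M1 M2). split; [lra|].
    intros a b pr Ha Hb. rewrite <- Int_eq.
    destruct (proj1 I1 a b) as [p1]. destruct (proj1 I2 a b) as [p2].
    rewrite (Int_plus_gen f g a b p1 p2).
    specialize (H1 a b ltac:(lra) ltac:(lra)). specialize (H2 a b ltac:(lra) ltac:(lra)).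
    replace (Int f a b + Int g a b - (l1 + l2)) with ((Int f a b - l1) + (Int g a b - l2)) by ring.
    eapply Rle_lt_trans. apply Rabs_triang. lra.
Qed.

Lemma impC_add f g I J : improper_intC f I -> improper_intC g J -> improper_intC (fun t => Cadd (f t) (g t)) (Cadd I J).
Proof.
  intros [A1 A2] [B1 B2]. split; simpl; apply imp_add_gen; auto.
Qed.

Lemma impC_zero : improper_intC (fun _ => C0) C0.
Proof. split; simpl; apply imp_zero. Qed.

Lemma isR_add k : forall F G I J, is_integral_Rd k F I -> is_integral_Rd k G J ->
  is_integral_Rd k (fun y => Cadd (F y) (G y)) (Cadd I J).
Proof.
  induction k; simpl; intros F G I J H1 H2.
  - subst; auto.
  - destruct H1 as [G1 [H1a H1b]]. destruct H2 as [G2 [H2a H2b]].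
    exists (fun t => Cadd (G1 t) (G2 t)). split.
    + intros t. apply (IHk (fun y => F (upd y k t)) (fun y => G (upd y k t))); auto.
    + apply impC_add; auto.
Qed.

Lemma isR_zero k : is_integral_Rd k (fun _ => C0) C0.
Proof.
  induction k; simpl; auto. exists (fun _ => C0). split; auto. apply impC_zero.
Qed.

Lemma isR_ext k F G I : (forall y, F y = G y) -> is_integral_Rd k F I -> is_integral_Rd k G I.
Proof. intros H. replace G with F; auto. apply functional_extensionality; auto. Qed.

Definition gterm (c : C) (t : R) : C := Cadd (Cofr (- t ^ 2 / 2)) (Cmul c (Cofr t)).

Lemma Cexp_gterm c t : Cexp (gterm c t) = mkC (ge (Re c) t * cos (Im c * t)) (ge (Re c) t * sin (Im c * t)).
Proof.
  destruct c as [p q]. unfold gterm, Cexp, ge; simpl.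
  replace (p * t - q * 0) with (p * t) by ring. replace (0 + (p * 0 + q * t)) with (q * t) by ring. auto.
Qed.

Lemma gauss_C c K : improper_intC (fun t => Cmul K (Cexp (gterm c t)))
  (Cmul K (Cmul (Cofr (sqrt (2 * PI))) (Cexp (Cmul (Cofr (1/2)) (Cmul c c))))).
Proof.
  destruct c as [p q]. destruct K as [k1 k2].
  destruct (gauss1 p q) as [G1 G2].
  assert (Cc : forall r, continuity (fun t => ge p t * cos (r * t))) by (intros; creg).
  assert (Cs : forall r, continuity (fun t => ge p t * sin (r * t))) by (intros; creg).
  split.
  - eapply imp_ext; [|eapply imp_val; [|apply (imp_lin _ _ _ _ (- k2) (cont_scal k1 _ (Cc q)) (Cs q) (imp_scal _ _ k1 (Cc q) G1) G2)]].
    + intros t. rewrite Cexp_gterm. simpl. ring.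
    + unfold Cexp; simpl. replace (1 / 2 * (p * p - q * q) - 0 * (p * q + q * p)) with ((p ^ 2 - q ^ 2) / 2) by field.
      replace (1 / 2 * (p * q + q * p) + 0 * (p * p - q * q)) with (p * q) by field. replace ((p * (p * 1) - q * (q * 1)) / 2) with ((p ^ 2 - q ^ 2) / 2) by field. ring.
  - eapply imp_ext; [|eapply imp_val; [|apply (imp_lin _ _ _ _ k2 (cont_scal k1 _ (Cs q)) (Cc q) (imp_scal _ _ k1 (Cs q) G2) G1)]].
    + intros t. rewrite Cexp_gterm. simpl. ring.
    + unfold Cexp; simpl. replace (1 / 2 * (p * p - q * q) - 0 * (p * q + q * p)) with ((p ^ 2 - q ^ 2) / 2) by field.
      replace (1 / 2 * (p * q + q * p) + 0 * (p * p - q * q)) with (p * q) by field. replace ((p * (p * 1) - q * (q * 1)) / 2) with ((p ^ 2 - q ^ 2) / 2) by field. ring.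
Qed.

Lemma impC_ext f g I : (forall t, f t = g t) -> improper_intC f I -> improper_intC g I.
Proof. intros H. replace g with f; auto. apply functional_extensionality; auto. Qed.
Lemma impC_val f I J : I = J -> improper_intC f I -> improper_intC f J.
Proof. intros ->; auto. Qed.

Definition Fsum k (y : nat -> R) (c : nat -> C) := Csum_upto k (fun i => gterm (c i) (y i)).
Definition Ssq k (c : nat -> C) := Csum_upto k (fun i => Cmul (Cofr (1/2)) (Cmul (c i) (c i))).

Lemma gauss_Rd k : forall K c, is_integral_Rd k (fun y => Cmul K (Cexp (Fsum k y c)))
   (Cmul K (Cmul (Cofr (sqrt (2 * PI) ^ k)) (Cexp (Ssq k c)))).
Proof.
  induction k; intros K c.
  - simpl. unfold Fsum, Ssq; simpl. rewrite Cexp_C0, Cofr_1. ring.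
  - simpl. exists (fun t => Cmul (Cmul K (Cexp (gterm (c k) t))) (Cmul (Cofr (sqrt (2 * PI) ^ k)) (Cexp (Ssq k c)))).
    split.
    + intros t. apply isR_ext with (F := fun y => Cmul (Cmul K (Cexp (gterm (c k) t))) (Cexp (Fsum k y c))); [|apply IHk].
      intros y. unfold Fsum. simpl. unfold upd at 2. rewrite Nat.eqb_refl.
      rewrite (Csum_ext k (fun i => gterm (c i) (upd y k t i)) (fun i => gterm (c i) (y i))).
      * rewrite Cexp_add. ring.
      * intros i Hi. unfold upd. replace (Nat.eqb i k) with false; auto. symmetry. apply Nat.eqb_neq. lia.
    + eapply impC_ext; [|eapply impC_val; [|apply (gauss_C (c k) (Cmul K (Cmul (Cofr (sqrt (2 * PI) ^ k)) (Cexp (Ssq k c)))))]].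
      * intros t. cbv beta. ring.
      * unfold Ssq. simpl. rewrite Cexp_add, Cofr_mul. fold (Ssq k c). ring.
Qed.

Definition Tm (z : C) (r cq t : R) : C :=
  Cadd (Cmul z (Cofr (r * t))) (Cadd (Cmul (Cofr (-(1/2))) (Cmul z z)) (Cofr (cq * (t * t)))).

Definition cc su sv A B (xi eta : C) (X : R) : C :=
  Cadd (Cmul (Cofr (-(su * B))) xi) (Cadd (Cofr (X * (B * B))) (Cmul (Cofr (sv * A)) eta)).
Definition kk su sv B (xi eta : C) (X : R) : C :=
  Cadd (Cmul (Cofr (su * B * X)) xi) (Cadd (Cmul (Cofr (-(su * su) / 2)) (Cmul xi xi))
     (Cadd (Cofr (- (X * X) * (B * B) / 2)) (Cmul (Cofr (- (sv * sv) / 2)) (Cmul eta eta)))).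

Lemma idA su sv A B xi eta X Y : A * A + B * B = 1 ->
  Cadd (Tm (Cmul (Cofr su) xi) B (- (B * B) / 2) (X - Y)) (Tm (Cmul (Cofr sv) eta) A (- (A * A) / 2) Y)
  = Cadd (gterm (cc su sv A B xi eta X) Y) (kk su sv B xi eta X).
Proof.
  intros H. destruct xi as [x1 x2], eta as [e1 e2].
  unfold Tm, gterm, cc, kk. apply C_ext; simpl; field_simplify; try apply (f_equal (fun z => z / 2)); simpl; nsatz.
Qed.

Lemma idB su sv A B xi eta X : su * A = 1 -> sv * B = 1 -> A * A + B * B = 1 ->
  Cadd (kk su sv B xi eta X) (Cmul (Cofr (1/2)) (Cmul (cc su sv A B xi eta X) (cc su sv A B xi eta X)))
  = Tm (Cadd xi eta) (A * B) (- (A * A * B * B) / 2) X.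
Proof.
  intros H1 H2 H3. destruct xi as [x1 x2], eta as [e1 e2].
  unfold Tm, gterm, cc, kk. apply C_ext; simpl; field_simplify; try apply (f_equal (fun z => z / 2)); simpl; nsatz.
Qed.

Lemma Rsum_ext n f g : (forall i, (i < n)%nat -> f i = g i) -> Rsum_upto n f = Rsum_upto n g.
Proof. induction n; simpl; intros H; auto. rewrite IHn by (intros; apply H; lia). rewrite H by lia. auto. Qed.
Lemma Rsum_scal n c f : Rsum_upto n (fun i => c * f i) = c * Rsum_upto n f.
Proof. induction n; simpl. ring. rewrite IHn. ring. Qed.

Lemma term_form d a z w y : 0 < w ->
  dilgauss d (fun x => Cmul a (expo d z x)) w y =
  Cmul a (Cexp (Csum_upto d (fun i => Tm (z i) (/ sqrt w) (- / (2 * w)) (y i)))).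
Proof.
  intros Hw. unfold dilgauss, expo, cdot, creal, vscale, rdot.
  rewrite Cofr_exp.
  replace (- Rsum_upto d (fun i => y i * y i) / (2 * w)) with (Rsum_upto d (fun i => - / (2 * w) * (y i * y i)))
    by (rewrite Rsum_scal; field; lra).
  rewrite Cofr_Rsum, Cscale_mul, <- Csum_scal.
  match goal with |- Cmul (Cmul a (Cexp (Cadd ?S1 ?S2))) (Cexp ?S3) = _ =>
    transitivity (Cmul a (Cexp (Cadd (Cadd S1 S2) S3))); [rewrite !Cexp_add; ring|] end.
  f_equal. f_equal. rewrite <- !Csum_add. apply Csum_ext. intros i _. unfold Tm. ring.
Qed.

Lemma single d u v (hu : 0 < u) (hv : 0 < v) (huv : / u + / v = 1) a b (xi eta : nat -> C) x :
  conv_is d (dilgauss d (fun z => Cmul a (expo d (fun i => Cmul (Cofr (sqrt u)) (xi i)) z)) v)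
            (dilgauss d (fun z => Cmul b (expo d (fun i => Cmul (Cofr (sqrt v)) (eta i)) z)) u) x
            (dilgauss d (fun z => Cmul (Cmul a b) (expo d (fun i => Cadd (xi i) (eta i)) z)) (u * v) x).
Proof.
  set (su := sqrt u). set (sv := sqrt v).
  assert (Hsu : 0 < su) by (apply sqrt_lt_R0; auto). assert (Hsv : 0 < sv) by (apply sqrt_lt_R0; auto).
  assert (Eu : su * su = u) by (apply sqrt_sqrt; lra). assert (Ev : sv * sv = v) by (apply sqrt_sqrt; lra).
  set (A := / su). set (B := / sv).
  assert (H1 : su * A = 1) by (unfold A; field; lra). assert (H2 : sv * B = 1) by (unfold B; field; lra).
  assert (H3 : A * A + B * B = 1).
  { rewrite <- huv, <- Eu, <- Ev. unfold A, B. field. lra. }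
  assert (Cv : - / (2 * v) = - (B * B) / 2) by (rewrite <- Ev; unfold B; field; lra).
  assert (Cu : - / (2 * u) = - (A * A) / 2) by (rewrite <- Eu; unfold A; field; lra).
  assert (Cuv : - / (2 * (u * v)) = - (A * A * B * B) / 2) by (rewrite <- Eu, <- Ev; unfold A, B; field; lra).
  assert (Suv : / sqrt (u * v) = A * B).
  { rewrite sqrt_mult by lra. fold su sv. unfold A, B. field. lra. }
  set (c := fun i => cc su sv A B (xi i) (eta i) (x i)).
  set (K := Cmul (Cmul a b) (Cexp (Csum_upto d (fun i => kk su sv B (xi i) (eta i) (x i))))).
  exists (Cmul K (Cmul (Cofr (sqrt (2 * PI) ^ d)) (Cexp (Ssq d c)))). split.
  - apply isR_ext with (F := fun y => Cmul K (Cexp (Fsum d y c))); [|apply gauss_Rd].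
    intros y. symmetry. rewrite !term_form by auto. change (/ sqrt v) with B. change (/ sqrt u) with A. rewrite Cv, Cu.
    unfold K, Fsum.
    transitivity (Cmul (Cmul a b) (Cexp (Csum_upto d (fun i => Cadd (Tm (Cmul (Cofr su) (xi i)) B (- (B * B) / 2) (vsub x y i))
                                                                (Tm (Cmul (Cofr sv) (eta i)) A (- (A * A) / 2) (y i)))))).
    + rewrite Csum_add, Cexp_add. ring.
    + rewrite (Csum_ext d _ (fun i => Cadd (gterm (c i) (y i)) (kk su sv B (xi i) (eta i) (x i)))).
      * rewrite Csum_add, Cexp_add. ring.
      * intros i _. unfold c, vsub. apply idA; auto.
  - rewrite term_form by (apply Rmult_lt_0_compat; auto). rewrite Suv, Cuv.
    rewrite (Csum_ext d _ (fun i => Cadd (kk su sv B (xi i) (eta i) (x i)) (Cmul (Cofr (1/2)) (Cmul (c i) (c i))))).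
    + rewrite Csum_add, Cexp_add. fold (Ssq d c). unfold K. rewrite Cscale_mul.
      assert (P : Cmul (Cofr ((/ sqrt (2 * PI)) ^ d)) (Cofr (sqrt (2 * PI) ^ d)) = C1).
      { rewrite <- Cofr_mul, <- Rpow_mult_distr, Rinv_l, pow1. reflexivity.
        apply Rgt_not_eq, sqrt_lt_R0. pose proof PI_RGT_0; lra. }
      transitivity (Cmul (Cmul (Cofr ((/ sqrt (2 * PI)) ^ d)) (Cofr (sqrt (2 * PI) ^ d)))
        (Cmul (Cmul a b) (Cmul (Cexp (Csum_upto d (fun i => kk su sv B (xi i) (eta i) (x i)))) (Cexp (Ssq d c))))).
      * rewrite P. ring.
      * ring.
    + intros i _. symmetry. unfold c. apply idB; auto.
Qed.

Lemma conv_addL d F1 F2 G x I1 I2 : conv_is d F1 G x I1 -> conv_is d F2 G x I2 ->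
  conv_is d (fun z => Cadd (F1 z) (F2 z)) G x (Cadd I1 I2).
Proof.
  intros [J1 [H1 E1]] [J2 [H2 E2]]. exists (Cadd J1 J2). split.
  - eapply isR_ext; [|apply (isR_add _ _ _ _ _ H1 H2)]. intros y. cbv beta. ring.
  - subst. rewrite !Cscale_mul. ring.
Qed.
Lemma conv_addR d F G1 G2 x I1 I2 : conv_is d F G1 x I1 -> conv_is d F G2 x I2 ->
  conv_is d F (fun z => Cadd (G1 z) (G2 z)) x (Cadd I1 I2).
Proof.
  intros [J1 [H1 E1]] [J2 [H2 E2]]. exists (Cadd J1 J2). split.
  - eapply isR_ext; [|apply (isR_add _ _ _ _ _ H1 H2)]. intros y. cbv beta. ring.
  - subst. rewrite !Cscale_mul. ring.
Qed.
Lemma conv_zeroL d G x : conv_is d (fun _ => C0) G x C0.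
Proof.
  exists C0. split. eapply isR_ext; [|apply isR_zero]. intros y. cbv beta. ring.
  rewrite Cscale_mul. ring.
Qed.
Lemma conv_zeroR d F x : conv_is d F (fun _ => C0) x C0.
Proof.
  exists C0. split. eapply isR_ext; [|apply isR_zero]. intros y. cbv beta. ring.
  rewrite Cscale_mul. ring.
Qed.

Lemma dil_add d f1 f2 w : dilgauss d (fun z => Cadd (f1 z) (f2 z)) w = fun y => Cadd (dilgauss d f1 w y) (dilgauss d f2 w y).
Proof. apply functional_extensionality. intros y. unfold dilgauss. ring. Qed.
Lemma dil_nil d w : dilgauss d (evalE d nil) w = fun _ => C0.
Proof. apply functional_extensionality. intros y. unfold dilgauss, evalE. simpl. ring. Qed.
Lemma evalE_cons d p l : evalE d (p :: l) = fun z => Cadd (Cmul (fst p) (expo d (snd p) z)) (evalE d l z).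
Proof. reflexivity. Qed.
Lemma evalE_app d l1 l2 : evalE d (l1 ++ l2) = fun z => Cadd (evalE d l1 z) (evalE d l2 z).
Proof.
  apply functional_extensionality. intros z. induction l1 as [|p l1 IH].
  - unfold evalE; simpl. ring.
  - change ((p :: l1) ++ l2) with (p :: (l1 ++ l2)). rewrite !evalE_cons. cbv beta. rewrite IH. ring.
Qed.

Lemma row (d : nat) (u v : R) (hu : 0 < u) (hv : 0 < v) (huv : / u + / v = 1) a xi psi x :
  conv_is d (dilgauss d (fun z => Cmul a (expo d (fun i => Cmul (Cofr (sqrt u)) (xi i)) z)) v)
            (dilgauss d (evalE d (GammaE (Cofr (sqrt v)) psi)) u) x
            (dilgauss d (evalE d (map (fun q => (Cmul a (fst q), fun i => Cadd (xi i) (snd q i))) psi)) (u * v) x).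
Proof.
  induction psi as [|[b eta] psi IH].
  - simpl. rewrite !dil_nil. apply conv_zeroR.
  - simpl. rewrite !evalE_cons, !dil_add. simpl. apply conv_addR; auto.
    apply single; auto.
Qed.

Lemma part1 (d : nat) (u v : R) (hu : 0 < u) (hv : 0 < v) (huv : / u + / v = 1) phi psi x :
  conv_is d (dilgauss d (evalE d (GammaE (Cofr (sqrt u)) phi)) v)
            (dilgauss d (evalE d (GammaE (Cofr (sqrt v)) psi)) u) x
            (dilgauss d (evalE d (wick phi psi)) (u * v) x).
Proof.
  induction phi as [|[a xi] phi IH].
  - simpl. unfold wick; simpl. rewrite !dil_nil. apply conv_zeroL.
  - simpl. unfold wick; simpl. fold (wick phi psi).
    rewrite evalE_app, !evalE_cons, !dil_add. simpl. apply conv_addL; auto.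
    apply row; auto.
Qed.

Lemma GammaE_inv c c' phi : Cmul c c' = C1 -> GammaE c (GammaE c' phi) = phi.
Proof.
  intros H. induction phi as [|[a xi] phi IH]; simpl; auto. rewrite IH. f_equal. f_equal.
  apply functional_extensionality. intros i. transitivity (Cmul (Cmul c c') (xi i)). ring. rewrite H. ring.
Qed.

Theorem lemma3p2 (d : nat) (hd : (1 <= d)%nat) (u v : R)
  (hu : 0 < u) (hv : 0 < v) (huv : / u + / v = 1) :
  (forall (phi psi : Exps) (x : nat -> R),
     conv_is d
       (dilgauss d (evalE d (GammaE (Cofr (sqrt u)) phi)) v)
       (dilgauss d (evalE d (GammaE (Cofr (sqrt v)) psi)) u)
       x
       (dilgauss d (evalE d (wick phi psi)) (u * v) x))
  /\
  (forall (phi psi : Exps) (x : nat -> R),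
     conv_is d
       (dilgauss d (evalE d phi) v)
       (dilgauss d (evalE d psi) u)
       x
       (dilgauss d (evalE d (wick (GammaE (Cofr (/ sqrt u)) phi)
                                  (GammaE (Cofr (/ sqrt v)) psi))) (u * v) x)).
Proof.
  split.
  - intros. apply part1; auto.
  - intros phi psi x.
    pose proof (part1 d u v hu hv huv (GammaE (Cofr (/ sqrt u)) phi) (GammaE (Cofr (/ sqrt v)) psi) x) as P.
    rewrite !GammaE_inv in P; auto.
    + rewrite <- Cofr_mul, Rinv_r. reflexivity. apply Rgt_not_eq, sqrt_lt_R0; auto.
    + rewrite <- Cofr_mul, Rinv_r. reflexivity. apply Rgt_not_eq, sqrt_lt_R0; auto.
Qed.
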